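(* Let $I\subseteq\mathbb{R}$ be an interval containing $0$ and let $f:I\to\mathbb{R}$ be such that $f|_{I\cap[0,\infty)}$ is convex and $f(-x)=-f(x)$ whenever $x$ and $-x$ both belong to $I$. Then for every family of points $a_1,\dots,a_n\in I$ such that \[ \sum_{k=1}^n a_k+(n-2)\min\{a_1,\dots,a_n\}\ge0, \] we have \[ f\left(\frac1n\sum_{k=1}^n a_k\right)\le\frac1n\sum_{k=1}^n f(a_k). \] *)

(* Defs.v *)
From mathcomp Require Import all_boot all_order all_algebra.
Set Implicit Arguments. Unset Strict Implicit. Unset Printing Implicit Defensive.
Import Order.TTheory GRing.Theory Num.Theory.
Local Open Scope ring_scope.

Definition is_interval (R : realDomainType) (I : R -> Prop) : Prop :=
  forall x y z, I x -> I z -> x <= y -> y <= z -> I y.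

Definition convex_on (R : realDomainType) (D : R -> Prop) (f : R -> R) : Prop :=
  forall x y t, D x -> D y -> 0 <= t -> t <= 1 ->
    f (t * x + (1 - t) * y) <= t * f x + (1 - t) * f y.

Definition fmin (R : realDomainType) (n : nat) (a : 'I_n -> R) : R :=
  match n return ('I_n -> R) -> R with
  | 0 => fun _ => 0
  | m.+1 => fun a => \big[Num.min/a ord0]_(i < m.+1) a i
  end a.

(* Main.v *)
Require Import Defs.
From mathcomp Require Import all_boot all_order all_algebra.
From mathcomp Require Import lra ring.
Import Order.TTheory GRing.Theory Num.Theory.
Local Open Scope ring_scope.

Section S.
Variables (R : realFieldType) (I : R -> Prop) (f : R -> R).
Hypothesis hI : is_interval I.
Hypothesis hconv : convex_on (fun x => I x /\ 0 <= x) f.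

Lemma conv_mem a b t : I a -> I b -> 0 <= a -> 0 <= b -> 0 <= t -> t <= 1 ->
  I (t * a + (1 - t) * b) /\ 0 <= t * a + (1 - t) * b.
Proof.
move=> Ia Ib a0 b0 t0 t1.
have h1 : 0 <= t * a by apply: mulr_ge0.
have h2 : 0 <= (1 - t) * b by apply: mulr_ge0; lra.
split; last lra.
have [ab|ba] := leP a b.
- have e1 : 0 <= t * (b - a) by apply: mulr_ge0; lra.
  have e2 : 0 <= (1 - t) * (b - a) by apply: mulr_ge0; lra.
  apply: (hI a _ b Ia Ib); lra.
- have e1 : 0 <= t * (a - b) by apply: mulr_ge0; lra.
  have e2 : 0 <= (1 - t) * (a - b) by apply: mulr_ge0; lra.
  apply: (hI b _ a Ib Ia); lra.
Qed.

Lemma jensen n (w x : 'I_n -> R) : (forall i, 0 <= w i) ->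
  (forall i, I (x i) /\ 0 <= x i) ->
  (0 < \sum_i w i -> I ((\sum_i w i * x i) / \sum_i w i) /\
                       0 <= (\sum_i w i * x i) / \sum_i w i) /\
  (\sum_i w i) * f ((\sum_i w i * x i) / \sum_i w i) <= \sum_i w i * f (x i).
Proof.
elim: n w x => [|n IH] w x w0 Dx.
  rewrite !big_ord0; split; [by rewrite ltxx | by rewrite mul0r].
rewrite !big_ord_recr /=.
set w' := fun i : 'I_n => w (widen_ord (leqnSn n) i).
set x' := fun i : 'I_n => x (widen_ord (leqnSn n) i).
have [IH1 IH2] := IH w' x' (fun i => w0 _) (fun i => Dx _).
rewrite -/(w' _) in IH1 IH2 *.
set W := \sum_(i < n) w' i in IH1 IH2 *.
set S := \sum_(i < n) w' i * x' i in IH1 IH2 *.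
set F := \sum_(i < n) w' i * f (x' i) in IH1 IH2 *.
have W0 : 0 <= W by apply: sumr_ge0 => i _; apply: w0.
have wn0 := w0 ord_max.
have [Dxn1 Dxn2] := Dx ord_max.
have [Wz|Wp] := eqVneq W 0.
  have hz := psumr_eq0P (fun i _ => w0 (widen_ord (leqnSn n) i)) Wz.
  have Sz : S = 0 by rewrite /S big1 // => i _; rewrite /w' hz ?mul0r.
  have Fz : F = 0 by rewrite /F big1 // => i _; rewrite /w' hz ?mul0r.
  rewrite Wz Sz Fz !add0r.
  have [wz|wp] := eqVneq (w ord_max) 0.
    by rewrite wz !mul0r; split => //; rewrite ltxx.
  rewrite mulrAC divff // mul1r; split => //.
have Wpos : 0 < W by rewrite lt0r Wp.
have [D1 D2] := IH1 Wpos.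
set t := W / (W + w ord_max).
have Wt : 0 < W + w ord_max by lra.
have t0 : 0 <= t by rewrite /t divr_ge0 //; lra.
have t1 : t <= 1 by rewrite /t ler_pdivrMr // mul1r; lra.
have eq : (S + w ord_max * x ord_max) / (W + w ord_max) =
   t * (S / W) + (1 - t) * x ord_max.
  rewrite /t; field; apply/andP; split => //; rewrite lt0r_neq0 //.
rewrite eq.
split.
  move=> _; apply: conv_mem => //.
have hc := @hconv (S / W) (x ord_max) t (conj D1 D2) (conj Dxn1 Dxn2) t0 t1.
have e2 : (W + w ord_max) * (t * f (S / W) + (1 - t) * f (x ord_max)) =
   W * f (S / W) + w ord_max * f (x ord_max).
  rewrite /t; field; rewrite lt0r_neq0 //.
apply: le_trans (_ : (W + w ord_max) * (t * f (S / W) + (1 - t) * f (x ord_max)) <= _).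
  by apply: ler_wpM2l => //; lra.
rewrite e2; lra.
Qed.

Lemma chord t Y : I 0 -> I Y -> 0 <= t -> t <= Y -> 0 < Y -> f 0 = 0 ->
  Y * f t <= t * f Y.
Proof.
move=> I0 IY t0 tY Y0 f0.
set c := t / Y.
have c0 : 0 <= c by rewrite /c divr_ge0 //; lra.
have c1 : c <= 1 by rewrite /c ler_pdivrMr // mul1r.
have hc := @hconv Y 0 c (conj IY (ltW Y0)) (conj I0 (lexx 0)) c0 c1.
have e1 : c * Y + (1 - c) * 0 = t by rewrite /c; field; rewrite lt0r_neq0.
rewrite e1 f0 mulr0 addr0 in hc.
have := ler_wpM2l (ltW Y0) hc.
have -> : Y * (c * f Y) = t * f Y by rewrite /c; field; rewrite lt0r_neq0.
done.
Qed.
End S.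

Lemma fmin_le (R : realFieldType) n (a : 'I_n -> R) i : fmin a <= a i.
Proof.
case: n a i => [|n] a i; first by case: i.
rewrite /fmin (bigD1 i) //=; by rewrite ge_min lexx.
Qed.

Lemma fmin_at (R : realFieldType) n (a : 'I_n -> R) : (0 < n)%N -> exists i, a i = fmin a.
Proof.
case: n a => [|n] a //= _.
apply: (big_ind (fun x => exists i, a i = x)).
- by exists ord0.
- move=> x y [i hi] [j hj]; rewrite /Num.min.
  by case: ifP => _; [exists i | exists j].
- by move=> i _; exists i.
Qed.
Theorem corollary3 (R : realFieldType) (I : R -> Prop) (f : R -> R)
  (hI : is_interval I) (hI0 : I 0)
  (hconv : convex_on (fun x => I x /\ 0 <= x) f)
  (hodd : forall x, I x -> I (- x) -> f (- x) = - f x)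
  (n : nat) (hn : (0 < n)%N) (a : 'I_n -> R)
  (ha : forall i, I (a i))
  (hsum : 0 <= \sum_(i < n) a i + (n%:R - 2) * fmin a) :
  f (n%:R^-1 * \sum_(i < n) a i) <= n%:R^-1 * \sum_(i < n) f (a i).
Proof.
have f0 : f 0 = 0.
  have : f (- 0) = - f 0 by apply: hodd; rewrite ?oppr0.
  rewrite oppr0 => h; lra.
have [n1|n1] := eqVneq n 1%N.
  subst n; by rewrite !big_ord1 invr1 !mul1r.
have n2 : (1 < n)%N by rewrite ltn_neqAle eq_sym n1 hn.
set nR := n%:R : R.
have nR2 : 2 <= nR by rewrite /nR (ler_nat R 2 n).
have [i0 hi0] := @fmin_at R n a hn.
have hm := @fmin_le R n a.
set m := fmin a in hsum hi0 hm.
have eN : nR = \sum_(i < n) (1 : R) by rewrite sumr_const card_ord.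
have [m0|m0] := leP 0 m.
  have Da : forall i, I (a i) /\ 0 <= a i by move=> i; split => //; exact: le_trans m0 (hm i).
  have [_ J] := @jensen R I f hI hconv n (fun _ => 1) a (fun _ => ler01) Da.
  rewrite -eN in J.
  have e2 : \sum_(i < n) (fun _ => (1:R)) i * a i = \sum_i a i by apply: eq_bigr => i _; rewrite mul1r.
  have e3 : \sum_(i < n) (fun _ => (1:R)) i * f (a i) = \sum_i f (a i) by apply: eq_bigr => i _; rewrite mul1r.
  rewrite e2 e3 in J.
  have nR0 : 0 < nR by lra.
  by rewrite ler_pdivlMl // [nR^-1 * _]mulrC.
rewrite -/nR in hsum.
pose w := fun i => if 0 <= a i then 1 else 0 : R.
pose x' := fun i => if 0 <= a i then a i else 0 : R.
have w0 : forall i, 0 <= w i by move=> i; rewrite /w; case: ifP.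
have Dx' : forall i, I (x' i) /\ 0 <= x' i by move=> i; rewrite /x'; case: ifP.
have [J1 J2] := @jensen R I f hI hconv n w x' w0 Dx'.
set K := \sum_i w i in J1 J2.
set P := \sum_i w i * x' i in J1 J2.
set F := \sum_i w i * f (x' i) in J1 J2.
set T := \sum_(i < n) (1 - w i) * a i.
have eS : \sum_i a i = P + T.
  rewrite /P /T -big_split; apply: eq_bigr => i _; rewrite /w /x'; case: ifP => _ /=; lra.
have neg : forall i, ~~ (0 <= a i) -> a i < 0 by move=> i; rewrite -ltNge.
have hT : T <= m.
  rewrite /T (bigD1 i0) //=.
  have hw : w i0 = 0 by rewrite /w hi0 (negbTE (_ : ~~ (0 <= m))) // -ltNge.
  rewrite hw hi0.
  have : \sum_(i < n | i != i0) (1 - w i) * a i <= 0.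
    apply: sumr_le0 => i _; rewrite /w; case: ifP => h; first lra.
    have := neg i (negbT h); lra.
  lra.
have hK : K <= nR - 1.
  have e1 : K = w i0 + \sum_(i < n | i != i0) w i by rewrite /K (bigD1 i0).
  have e2 : \sum_(i < n) (1:R) = 1 + \sum_(i < n | i != i0) (1:R) by rewrite (bigD1 i0).
  rewrite eN e1 e2.
  have hw : w i0 = 0 by rewrite /w hi0 (negbTE (_ : ~~ (0 <= m))) // -ltNge.
  have : \sum_(i < n | i != i0) w i <= \sum_(i < n | i != i0) (1:R).
    by apply: ler_sum => i _; rewrite /w; case: ifP.
  lra.
rewrite eS in hsum.
have hP : (nR - 1) * (- m) <= P by lra.
have K0 : 0 <= K by apply: sumr_ge0.
have hKm : K * (- m) <= (nR - 1) * (- m) by apply: ler_wpM2r => //; lra.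
have Ppos : 0 < P.
  have : 0 < (nR - 1) * (- m) by apply: mulr_gt0; lra.
  lra.
have Kpos : 0 < K.
  rewrite lt0r K0 andbT; apply/eqP => Kz.
  have hz := psumr_eq0P (fun i _ => w0 i) Kz.
  have : P = 0 by rewrite /P big1 // => i _; rewrite hz ?mul0r.
  lra.
have [IY Y0] := J1 Kpos.
set Y := P / K in IY Y0 J2.
have Ypos : 0 < Y by apply: divr_gt0.
have eKY : K * Y = P by rewrite /Y mulrC divfK // lt0r_neq0.
have muY : - m <= Y by rewrite -(ler_pM2l Kpos) eKY; lra.
have nR0 : 0 < nR by lra.
set s := nR^-1 * (P + T).
have ns : nR * s = P + T by rewrite /s mulVKf // lt0r_neq0.
have s0 : 0 <= s.
  have : 0 <= (nR - 2) * (- m) by apply: mulr_ge0; lra.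
  by move=> h; rewrite -(pmulr_rge0 _ nR0) ns; lra.
have sY : s <= Y.
  rewrite -(ler_pM2l nR0) ns.
  have : K * Y <= nR * Y by apply: ler_wpM2r; lra.
  lra.
have Imu : I (- m) by apply: (hI 0 _ Y) => //; lra.
have Is : I s by apply: (hI 0 _ Y).
have c1 := @chord R I f hconv s Y hI0 IY s0 sY Ypos f0.
have mpos : 0 < - m by lra.
have c2 := @chord R I f hconv (- m) Y hI0 IY (ltW mpos) muY Ypos f0.
have pw : forall i, (- m) * (w i * f (x' i)) + (1 - w i) * a i * f (- m) <= (- m) * f (a i).
  move=> i; rewrite /w /x'; case: ifP => h; first lra.
  have ai := neg i (negbT h).
  have Ia' : I (- a i) by apply: (hI 0 _ (- m)) => //; have := hm i; lra.
  have c3 := @chord R I f hconv (- a i) (- m) hI0 Imu (_ : 0 <= - a i) (_ : - a i <= - m) mpos f0.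
  have := hodd (- a i) Ia'; rewrite opprK => /(_ (ha i)) e.
  rewrite e.
  have h1 : 0 <= - a i by lra.
  have h2 : - a i <= - m by have := hm i; lra.
  have := c3 h1 h2; lra.
have hsumf : (- m) * F + T * f (- m) <= (- m) * \sum_i f (a i).
  rewrite /F /T mulr_sumr mulr_suml mulr_sumr -big_split; apply: ler_sum => i _.
  exact: pw.
have h1 : (- m) * (nR * (Y * f s)) <= (- m) * ((P + T) * f Y).
  apply: ler_wpM2l; first lra.
  rewrite -ns -mulrA; apply: ler_wpM2l; lra.
have h2 : (- T) * (Y * f (- m)) <= (- T) * ((- m) * f Y) by apply: ler_wpM2l; lra.
have h3 : Y * ((- m) * F + T * f (- m)) <= Y * ((- m) * \sum_i f (a i)) by apply: ler_wpM2l; lra.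
have h4 : (- m) * (P * f Y) <= (- m) * (Y * F).
  apply: ler_wpM2l; first lra.
  rewrite -eKY -mulrA mulrCA; apply: ler_wpM2l; lra.
have key : 0 <= (- m) * (Y * (\sum_i f (a i) - nR * f s)) by lra.
rewrite pmulr_rge0 ?oppr_gt0 // pmulr_rge0 // subr_ge0 in key.
by rewrite eS -/s ler_pdivlMl.
Qed.
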